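(* Let $X$ be a separable absolutely strongly star-Hurewicz space. If $Y$ is a closed and discrete subset of $X$, then $|Y|<\mathfrak{b}$.
   Context: All spaces are regular. $St(A,\mathcal{U})=\bigcup\{U\in\mathcal{U}:U\cap A\neq\emptyset\}$. $\mathfrak{b}$ is the bounding number. $X$ is absolutely strongly star-Hurewicz if for each sequence $(\mathcal{U}_n:n\in\omega)$ of open covers and each dense subset $D$ of $X$ there are finite sets $F_n\subseteq D$ ($n\in\omega$) such that every $x\in X$ lies in $St(F_n,\mathcal{U}_n)$ for all but finitely many $n$. *)

(* Defs.v *)
From HB Require Import structures.
From mathcomp Require Import all_boot all_order.
From mathcomp Require Import all_classical all_reals all_analysis.
Set Implicit Arguments. Unset Strict Implicit. Unset Printing Implicit Defensive.
Local Open Scope classical_set_scope.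
Local Open Scope card_scope.

Definition star (X : Type) (A : set X) (U : set (set X)) : set X :=
  \bigcup_(V in [set V | U V /\ V `&` A !=set0]) V.

Definition open_cover (X : topologicalType) (U : set (set X)) : Prop :=
  (forall V, U V -> open V) /\ \bigcup_(V in U) V = setT.

Definition separable (X : topologicalType) : Prop :=
  exists D : set X, countable D /\ dense D.

Definition abs_strongly_star_Hurewicz (X : topologicalType) : Prop :=
  forall (U : nat -> set (set X)) (D : set X),
    (forall n, open_cover (U n)) -> dense D ->
    exists F : nat -> set X,
      (forall n, finite_set (F n) /\ F n `<=` D) /\
      (forall x : X, exists N, forall n, (N <= n)%N -> star (F n) (U n) x).

Definition discrete_subset (X : topologicalType) (Y : set X) : Prop :=
  forall y, Y y -> exists V : set X, open V /\ V `&` Y = [set y].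

Definition le_star (f g : nat -> nat) : Prop :=
  exists N, forall n, (N <= n)%N -> (f n <= g n)%N.

Definition bounded_family (F : set (nat -> nat)) : Prop :=
  exists g, forall f, F f -> le_star f g.

(* b = min{|F| : F unbounded in (omega^omega, le_star)}; hence
   |Y| < b  iff  no unbounded family F has |F| <= |Y|. *)
Definition card_lt_b (T : Type) (Y : set T) : Prop :=
  forall F : set (nat -> nat), F #<= Y -> bounded_family F.

(* Main.v *)
Require Import Defs.
From HB Require Import structures.
From mathcomp Require Import all_boot all_order.
From mathcomp Require Import all_classical all_reals all_analysis.
Local Open Scope classical_set_scope.

Lemma card_le_fun (T U : Type) (A : set T) (B : set U) (a0 : T) :
  A a0 -> (A #<= B)%card ->
  exists f : T -> U, (forall a, A a -> B (f a)) /\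
    (forall a b, A a -> A b -> f a = f b -> a = b).
Proof.
move=> Aa0 /card_leP [phi].
have Hin : forall a, A a -> a \in A by move=> a Aa; rewrite inE.
pose u0 := val (phi (SigSub (Hin a0 Aa0))).
exists (fun a => match pselect (A a) with
                 | left Ha => val (phi (SigSub (Hin a Ha)))
                 | right _ => u0 end).
split.
- move=> a Aa; case: pselect => // Ha.
  by apply: set_mem; exact: valP.
- move=> a b Aa Ab; case: pselect => // Ha; case: pselect => // Hb.
  move=> /val_inj /(@inj _ _ _ phi).
  by move=> /(_ (in_setT _) (in_setT _)) /(congr1 val).
Qed.

Arguments card_le_fun {T U A B a0}.

Lemma sep_pt (X : topologicalType) (Y : set X) (W : set X) (y x : X) :
  regular_space X -> closed Y -> open W -> W `&` Y = [set y] -> x <> y ->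
  exists O, open O /\ O y /\ ~ O x.
Proof.
move=> reg cY oW WY xy.
have [//|hno] := pselect (exists O, open O /\ O y /\ ~ O x).
have H : forall O, open O -> O y -> O x.
  by move=> O oO Oy; apply: contrapT => nOx; apply: hno; exists O.
have Wy : (W `&` Y) y by rewrite WY.
have Wx : W x.
  apply: H => //; by case: Wy.
have [Yx|nYx] := pselect (Y x).
  have : (W `&` Y) x by [].
  by rewrite WY.
have nb : nbhs x (~` Y) by apply: open_nbhs_nbhs; split => //; exact: closed_openC.
have : filter_from (nbhs x) closure (~` Y) by exact: reg.
move=> [B nbB clB].
have ncl : ~ closure B y by move=> /clB; apply; case: Wy.
have [N [nbN BN]] : exists N, nbhs y N /\ ~ (B `&` N !=set0).
  apply: contrapT => hh; apply: ncl => N nbN.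
  by apply: contrapT => hh2; apply: hh; exists N.
move: nbN; rewrite nbhsE; case=> O1 [oO Oy] ON.
exfalso; apply: BN; exists x; split; first exact: nbhs_singleton.
by apply: ON; apply: H.
Qed.

Arguments sep_pt {X Y W y x}.

Lemma shrink (X : topologicalType) (Y : set X) (W D : set X) (iota : X -> nat) (y : X) :
  regular_space X -> closed Y -> open W -> W `&` Y = [set y] ->
  {in D &, injective iota} ->
  forall m, exists O, open O /\ O y /\ O `<=` W /\
    forall x, D x -> (iota x < m)%N -> O x -> x = y.
Proof.
move=> reg cY oW WY iI; elim=> [|m [ O [oO [Oy [OW HO]]]]].
  exists W; split => //; split.
    have : (W `&` Y) y by rewrite WY.
    by case.
  by split.
have [[x [Dx [ix xy]]]|hno] := pselect (exists x, D x /\ iota x = m /\ x <> y).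
  have [Q [oQ [Qy nQx]]] := sep_pt reg cY oW WY xy.
  exists (O `&` Q); split; first exact: openI.
  split; first by [].
  split; first by move=> z [/OW].
  move=> z Dz; rewrite ltnS leq_eqVlt => /orP [/eqP izm|izm] [Oz Qz].
    have zx : z = x by apply: iI; rewrite ?inE // izm ix.
    by rewrite zx in Qz.
  exact: HO.
exists O; split => //; split => //; split => //.
move=> z Dz; rewrite ltnS leq_eqVlt => /orP [/eqP izm|izm] Oz; last exact: HO.
apply: contrapT => zy; apply: hno; exists z; split => //.
Qed.

Arguments shrink {X Y W D iota y}.

Theorem mainTheorem11 (X : topologicalType) (Y : set X) :
  regular_space X -> separable X -> abs_strongly_star_Hurewicz X ->
  closed Y -> discrete_subset Y -> card_lt_b Y.
Proof.
move=> reg [D [cD dD]] assh cY dY F FY.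
have [[f0 Ff0]|nF] := pselect (F !=set0); last first.
  by exists (fun _ => 0%N) => f Ff; exfalso; apply: nF; exists f.
have [phi [phiY phiI]] := card_le_fun Ff0 FY.
have /pcard_injP [iota iotaI] := cD.
have /choice [W HW] : forall y, exists V, Y y -> open V /\ V `&` Y = [set y].
  move=> y; have [Yy|nYy] := pselect (Y y); last by exists setT.
  by have [V HV] := dY y Yy; exists V.
have /choice [fy Hfy] : forall y, exists g : nat -> nat,
    forall f, F f -> phi f = y -> g = f.
  move=> y; have [[f [Ff fy]]|nf] := pselect (exists f, F f /\ phi f = y).
    by exists f => g Fg gy; apply: phiI => //; rewrite fy gy.
  by exists f0 => g Fg gy; exfalso; apply: nf; exists g.
have /choice [Oc HO] : forall p : X * nat, exists Oc, Y p.1 ->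
    open Oc /\ Oc p.1 /\ Oc `<=` W p.1 /\
    forall x, D x -> (iota x < p.2)%N -> Oc x -> x = p.1.
  move=> [y m]; have [Yy|nYy] := pselect (Y y); last by exists setT.
  have [oW WY] := HW y Yy.
  have [Q HQ] := shrink reg cY oW WY iotaI m.
  by exists Q.
pose U n := [set V | V = ~` Y \/ exists y, Y y /\ V = Oc (y, fy y n)].
have cov : forall n, open_cover (U n).
  move=> n; split.
    move=> V [->|[y [Yy ->]]]; first exact: closed_openC.
    by have [] := HO (y, fy y n) Yy.
  apply/seteqP; split => // x _.
  have [Yx|nYx] := pselect (Y x).
    exists (Oc (x, fy x n)); first by right; exists x.
    by have [_ []] := HO (x, fy x n) Yx.
  by exists (~` Y) => //; left.
have [F' [hF' hstar]] := assh U D cov dD.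
have /choice [h Hh] : forall n, exists b, forall x, F' n x -> (iota x <= b)%N.
  move=> n; have := finite_image iota (proj1 (hF' n)).
  move=> /finite_fsetP [s Hs]; exists (\max_(i <- finmap.enum_fset s) i)%N => x Fx.
  have : (iota @` F' n) (iota x) by exists x.
  rewrite Hs /= => xs.
  exact: (@leq_bigmax_seq _ _ xpredT id).
have /choice [G HG] : forall m, exists g : nat -> nat,
    forall f, F f -> D (phi f) -> iota (phi f) = m -> g = f.
  move=> m.
  have [[f [Ff [Df fm]]]|nf] := pselect (exists f, F f /\ D (phi f) /\ iota (phi f) = m).
    exists f => g Fg Dg gm; apply: phiI => //; apply: iotaI; rewrite ?inE //.
    by rewrite fm gm.
  by exists f0 => g Fg Dg gm; exfalso; apply: nf; exists g.
exists (fun n => h n + \sum_(m < n.+1) G m n)%N => f Ff.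
have Yy := phiY f Ff.
have [Dy|nDy] := pselect (D (phi f)).
  exists (iota (phi f)) => n len.
  have Gf := HG _ f Ff Dy erefl.
  have lt : (iota (phi f) < n.+1)%N by rewrite ltnS.
  apply: leq_trans (leq_addl _ _).
  rewrite (bigD1 (Ordinal lt)) //= Gf.
  exact: leq_addr.
have [N HN] := hstar (phi f).
exists N => n Nn.
have [V [UV [x [Vx Fx]]] Vy] := HN n Nn.
case: UV => [VY|[z [Yz Vz]]]; first by rewrite VY in Vy.
rewrite Vz in Vy Vx.
have [_ [_ [OW HOz]]] := HO (z, fy z n) Yz.
have [_ WY] := HW z Yz.
have zy : phi f = z.
  have : (W z `&` Y) (phi f) by split => //; apply: OW.
  by rewrite WY.
rewrite -zy in Vx.
have fyf := Hfy _ f Ff erefl.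
rewrite -zy fyf /= in HOz; rewrite fyf in Vx.
have Dx : D x := proj2 (hF' n) x Fx.
apply: leq_trans (leq_addr _ _).
apply: leq_trans (Hh n x Fx).
rewrite leqNgt; apply/negP => lt.
apply: nDy; rewrite -(HOz x Dx lt Vx) //.
Qed.
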